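(* Let $\mathcal{C}$ be a full reflective subcategory of $\mathsf{Top}$, with reflection maps $r_Y:Y\to RY$, such that $\mathcal{C}$ contains a non-empty space that is finitely generated as an object of $\mathcal{C}$. Then for every directed diagram of monomorphisms in $\mathcal{C}$ with colimit $Z$ in $\mathsf{Top}$, the reflection map $r_Z:Z\to RZ$ is bijective.
   Context: A directed diagram is indexed by a directed poset (every finite subset has an upper bound). An object $X$ of $\mathcal{C}$ is finitely generated if for every directed diagram $(Z_i)_{i\in I}$ in $\mathcal{C}$ all of whose connecting morphisms $z_{i,j}$ are monomorphisms, with colimit cocone $c_i:Z_i\to Z$ in $\mathcal{C}$, every morphism $f:X\to Z$ factorizes as $f=c_i\cdot g$ for some $i$ and $g:X\to Z_i$, and if also $f=c_i\cdot g'$ then $z_{i,j}\cdot g=z_{i,j}\cdot g'$ for some connecting morphism $z_{i,j}$. *)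

(* Defs.v *)
From mathcomp Require Import all_boot all_order.
From mathcomp Require Import all_classical.
From mathcomp Require Import topology.
From Stdlib Require Lists.List.
Set Implicit Arguments. Unset Strict Implicit. Unset Printing Implicit Defensive.

(* A full subcategory of Top is given by a predicate on spaces; its
   morphisms are all continuous maps between spaces satisfying it. *)
Definition subcat := topologicalType -> Prop.

Definition directed_poset (I : Type) (le : rel I) : Prop :=
  [/\ reflexive le, antisymmetric le, transitive le &
      forall s : seq I, exists j, forall i, Stdlib.Lists.List.In i s -> le i j].

Definition is_diagram (I : Type) (le : rel I) (D : I -> topologicalType)
    (d : forall i j, le i j -> D i -> D j) : Prop :=
  [/\ (forall i j (h : le i j), continuous (d i j h)),
      (forall i (h : le i i) x, d i i h x = x) &
      (forall i j k (hij : le i j) (hjk : le j k) (hik : le i k) x,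
          d i k hik x = d j k hjk (d i j hij x))].

Definition is_cocone (I : Type) (le : rel I) (D : I -> topologicalType)
    (d : forall i j, le i j -> D i -> D j) (W : topologicalType)
    (c : forall i, D i -> W) : Prop :=
  (forall i, continuous (c i)) /\
  (forall i j (h : le i j) x, c j (d i j h x) = c i x).

(* Colimit cocone in the full subcategory P (universal among cocones
   with vertex in P).  Use P := fun _ => True for colimits in Top. *)
Definition is_colimit (P : subcat) (I : Type) (le : rel I)
    (D : I -> topologicalType) (d : forall i j, le i j -> D i -> D j)
    (Z : topologicalType) (c : forall i, D i -> Z) : Prop :=
  is_cocone d c /\
  forall (W : topologicalType), P W ->
  forall (e : forall i, D i -> W), is_cocone d e ->
  exists u : Z -> W,
    (continuous u /\ forall i x, u (c i x) = e i x) /\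
    forall u' : Z -> W, continuous u' -> (forall i x, u' (c i x) = e i x) ->
      forall z, u' z = u z.

Definition top_cat : subcat := fun _ => True.

Definition mono_in (C : subcat) (X Y : topologicalType) (f : X -> Y) : Prop :=
  forall W : topologicalType, C W ->
  forall g h : W -> X, continuous g -> continuous h ->
    (forall w, f (g w) = f (h w)) -> forall w, g w = h w.

Definition is_reflection (C : subcat) (R : topologicalType -> topologicalType)
    (r : forall Y : topologicalType, Y -> R Y) : Prop :=
  [/\ (forall Y, C (R Y)), (forall Y, continuous (r Y)) &
      forall (Y X : topologicalType), C X ->
      forall f : Y -> X, continuous f ->
      exists g : R Y -> X,
        (continuous g /\ forall y, g (r Y y) = f y) /\
        forall g' : R Y -> X, continuous g' -> (forall y, g' (r Y y) = f y) ->
          forall x, g' x = g x].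

Definition fin_gen (C : subcat) (X : topologicalType) : Prop :=
  forall (I : Type) (le : rel I), directed_poset le ->
  forall (D : I -> topologicalType) (d : forall i j, le i j -> D i -> D j),
  is_diagram d -> (forall i, C (D i)) ->
  (forall i j (h : le i j), mono_in C (d i j h)) ->
  forall (Z : topologicalType) (c : forall i, D i -> Z),
  C Z -> is_colimit C d c ->
  forall f : X -> Z, continuous f ->
    (exists i (g : X -> D i), continuous g /\ forall x, f x = c i (g x)) /\
    (forall i (g g' : X -> D i), continuous g -> continuous g' ->
       (forall x, f x = c i (g x)) -> (forall x, f x = c i (g' x)) ->
       exists j (h : le i j), forall x, d i j h (g x) = d i j h (g' x)).

(* Main.v *)
Require Import Defs.
From mathcomp Require Import all_boot all_order.
From mathcomp Require Import all_classical.
From mathcomp Require Import topology.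

Local Open Scope classical_set_scope.

Definition Wind := initial_topology (fun _ : bool => true).

Lemma Wind_cont (X : topologicalType) (f : X -> Wind) : continuous f.
Proof. apply: continuous_comp_initial; exact: cst_continuous. Qed.

Theorem proposition3p4
  (C : subcat) (R : topologicalType -> topologicalType)
  (r : forall Y : topologicalType, Y -> R Y)
  (hR : @is_reflection C R r)
  (hfg : exists X : topologicalType, [/\ C X, inhabited X & fin_gen C X])
  (I : Type) (le : rel I) (hI : directed_poset le)
  (D : I -> topologicalType) (d : forall i j, le i j -> D i -> D j)
  (hD : is_diagram d) (hDC : forall i, C (D i))
  (hmono : forall i j (h : le i j), mono_in C (d i j h))
  (Z : topologicalType) (c : forall i, D i -> Z)
  (hZ : is_colimit top_cat d c) :
  bijective (r Z).
Proof.
case: hfg => X [CX [x0] fgX].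
case: hR => CR rcont runiv.
case: hZ => [[ccont ccomp] Zuniv].
have [dcont did dcomp] := hD.
have hI0 := hI; case: hI0 => lerefl _ letrans hub.
have colR : is_colimit C d (fun i x => r Z (c i x)).
  split.
    split=> [i|i j h x]; last by rewrite ccomp.
    move=> x; apply: (@continuous_comp _ _ _ (c i) (r Z)); [exact: ccont|exact: rcont].
  move=> W CW e [econt ecomp].
  have [u [[ucont uc] uuniq]] := Zuniv W Logic.I e (conj econt ecomp).
  have [g [[gcont gr] guniq]] := runiv Z W CW u ucont.
  exists g; split.
    by split=> // i x; rewrite gr uc.
  move=> g' g'cont g'e z.
  apply: guniq => // y.
  apply: (uuniq (g' \o r Z)) => //.
  move=> x; apply: (@continuous_comp _ _ _ (r Z) g'); [exact: rcont|exact: g'cont].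
have fg := fgX I le hI D d hD hDC hmono
  (R Z) (fun i x => r Z (c i x)) (CR Z) colR.
have cover : forall z, exists i x, z = c i x.
  move=> z.
  pose P := fun z : Z => `[< exists i x, z = c i x >].
  have [u [_ uuniq]] := Zuniv Wind Logic.I (fun _ _ => true)
    (conj (fun i => @Wind_cont _ _) (fun _ _ _ _ => erefl)).
  have h1 := uuniq (fun _ => true) (@Wind_cont _ _) (fun _ _ => erefl) z.
  have h2 := uuniq (P : Z -> Wind) (@Wind_cont _ _)
    (fun i x => asboolT (ex_intro _ i (ex_intro _ x erefl))) z.
  have : P z by rewrite h2 -h1.
  by move/asboolP.
have inj : injective (r Z).
  move=> z1 z2 e.
  have [i [a Ha]] := cover z1; subst z1.
  have [j [b Hb]] := cover z2; subst z2.
  have [k hk] := hub [:: i; j].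
  have hik : le i k by apply: hk; left.
  have hjk : le j k by apply: hk; right; left.
  rewrite -(ccomp _ _ hik) -(ccomp _ _ hjk) in e *.
  have [_ H] := fg (fun _ => r Z (c i a)) (@cst_continuous _ _ _).
  have [l [hkl E]] := H k (fun _ => d i k hik a) (fun _ => d j k hjk b)
    (@cst_continuous _ _ _) (@cst_continuous _ _ _)
    (fun _ => ltac:(by rewrite ccomp)) (fun _ => ltac:(by rewrite -e ccomp)).
  by rewrite -(ccomp _ _ hkl (d i k hik a)) -(ccomp _ _ hkl (d j k hjk b)) (E x0).
have surj : forall p, exists z, r Z z = p.
  move=> p.
  have [[i [g [_ Hg]]] _] := fg (fun _ => p) (@cst_continuous _ _ _).
  by exists (c i (g x0)); rewrite -Hg.
exists (fun p => projT1 (cid (surj p))).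
  by move=> z; apply: inj; rewrite (projT2 (cid (surj _))).
by move=> p; rewrite (projT2 (cid (surj _))).
Qed.
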